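(* Let $F=F(N,\mathcal D)$ be a connected GSC and let $i,j\in\mathcal D$ be distinct. Then $\varphi_i(F)\cap\varphi_j(F)$ is a singleton if and only if there is exactly one pair $(i',j')\in\mathcal D\times\mathcal D$ such that $\varphi_{ii'}(F)\cap\varphi_{jj'}(F)\ne\varnothing$. Moreover, if this holds and $i'$ is a corner digit, then $j'$ is also a corner digit.
   Context: GSC: $N\ge2$, $\mathcal D\subset\{0,\dots,N-1\}^2$ with $1<|\mathcal D|<N^2$, $\varphi_i(x)=\frac1N(x+i)$, $F$ the attractor $F=\bigcup_{i\in\mathcal D}\varphi_i(F)$; $\varphi_{ii'}=\varphi_i\circ\varphi_{i'}$. A digit $i\in\mathcal D$ is a corner digit if $i\in\{(0,0),(0,N-1),(N-1,0),(N-1,N-1)\}$. *)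

(* Defs.v *)
From HB Require Import structures.
From mathcomp Require Import all_boot all_order all_algebra.
From mathcomp Require Import all_classical all_reals all_analysis.
Set Implicit Arguments. Unset Strict Implicit. Unset Printing Implicit Defensive.
Import Order.TTheory GRing.Theory Num.Theory.
Import numFieldNormedType.Exports.
Local Open Scope classical_set_scope.
Local Open Scope ring_scope.

(* A digit is a pair (a,b) with a,b in {0,...,N-1}. Points of the plane are R * R
   (product topology = Euclidean topology). *)
Definition digit (N : nat) := ('I_N * 'I_N)%type.

Definition phi {R : realType} (N : nat) (i : digit N) (x : R * R) : R * R :=
  ((x.1 + (i.1 : nat)%:R) / N%:R, (x.2 + (i.2 : nat)%:R) / N%:R).

Definition phi2 {R : realType} (N : nat) (i i' : digit N) : R * R -> R * R :=
  phi i \o phi i'.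

(* F is the attractor of the IFS {phi_i : i in D}: the unique nonempty compact set
   with F = \bigcup_{i in D} phi_i(F) (Hutchinson). *)
Definition is_attractor {R : realType} (N : nat) (D : {set digit N}) (F : set (R * R)) :=
  [/\ compact F, F !=set0 &
      F = \bigcup_(i in [set i | i \in D]) (phi i @` F)].

Definition GSC_data (N : nat) (D : {set digit N}) :=
  (2 <= N)%N /\ (1 < #|D| < N ^ 2)%N.

Definition corner_digit (N : nat) (i : digit N) : bool :=
  (((i.1 : nat) == 0%N) || ((i.1 : nat) == N.-1)) &&
  (((i.2 : nat) == 0%N) || ((i.2 : nat) == N.-1)).

(* Main.v *)
Require Import Defs.
From HB Require Import structures.
From mathcomp Require Import all_boot all_order all_algebra.
From mathcomp Require Import all_classical all_reals all_analysis.
From mathcomp Require Import lra ring zify.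
Import numFieldNormedType.Exports.
Set Implicit Arguments. Unset Strict Implicit. Unset Printing Implicit Defensive.
Local Open Scope classical_set_scope.
Local Open Scope ring_scope.

Section Basic.
Import Order.TTheory GRing.Theory Num.Theory.
Variable R : realType.
Variable N : nat.
Hypothesis N1 : (1 < N)%N.

Definition cr (c : bool) (p : R * R) : R := if c then p.1 else p.2.
Definition cd (c : bool) (d : digit N) : nat :=
  if c then nat_of_ord d.1 else nat_of_ord d.2.

Lemma Nn0 : (N%:R : R) != 0.
Proof. by rewrite pnatr_eq0 -lt0n; apply: ltnW. Qed.

Lemma crN c d x : N%:R * cr c (phi d x) = cr c x + (cd c d)%:R.
Proof. by case: c; rewrite /cr /phi /= mulrC divfK // Nn0. Qed.

Lemma crN2 c i e p : N%:R * (N%:R * cr c (phi i (phi e p))) =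
  cr c p + (cd c e)%:R + N%:R * (cd c i)%:R.
Proof. by rewrite crN mulrDr crN. Qed.

Lemma pt_eq (p q : R * R) : (forall c, cr c p = cr c q) -> p = q.
Proof.
case: p q => [p1 p2] [q1 q2] H.
have h1 := H true; have h2 := H false; rewrite /cr /= in h1 h2.
by rewrite h1 h2.
Qed.

Lemma dg_eq (d e : digit N) : (forall c, cd c d = cd c e) -> d = e.
Proof.
case: d e => [d1 d2] [e1 e2] H.
have h1 := H true; have h2 := H false; rewrite /cd /= in h1 h2.
by congr pair; apply: ord_inj.
Qed.

Lemma cd_lt c d : (cd c d < N)%N.
Proof. by case: c; rewrite /cd ltn_ord. Qed.

Lemma bool_cases (c c' : bool) : c' = c \/ c' = ~~ c.
Proof. by case: c; case: c'; auto. Qed.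

Lemma phi_inj (d : digit N) (x y : R * R) : phi d x = phi d y -> x = y.
Proof.
move=> H; apply: pt_eq => c.
apply: (addIr (cd c d)%:R); by rewrite -!crN H.
Qed.

Lemma phi_eqP (i j : digit N) (a b : R * R) :
  phi i a = phi j b <->
  (forall c, cr c a + (cd c i)%:R = cr c b + (cd c j)%:R).
Proof.
split.
  by move=> H c; rewrite -!crN H.
move=> H; apply: pt_eq => c; apply: (mulfI Nn0); by rewrite !crN.
Qed.

Lemma notc (i j : digit N) c : i != j -> cd c i = cd c j -> cd (~~ c) i != cd (~~ c) j.
Proof.
move=> ij h; apply/negP => /eqP h'; move/negP: ij; apply; apply/eqP/dg_eq => c'.
by case: (bool_cases c c') => ->.
Qed.

Lemma det0 (u : R) (e : nat) : 0 <= u -> u + e%:R = 0 -> u = 0 /\ e = 0%N.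
Proof.
move=> u0 h; have e0 := ler0n R e.
have he : (e%:R : R) = 0 by lra.
split; first lra.
by apply/eqP; rewrite -(eqr_nat R) he.
Qed.

Lemma det1 (u : R) (e : nat) : u <= 1 -> (e < N)%N -> u + e%:R = N%:R -> u = 1 /\ e = N.-1.
Proof.
move=> u1 eN h.
have hr : (e%:R : R) + 1 <= N%:R by rewrite natr1 ler_nat.
have he : (e%:R : R) + 1 = N%:R by lra.
split; first lra.
move: he; rewrite natr1 => /eqP; rewrite eqr_nat => /eqP <-.
by [].
Qed.

Lemma adj (a b : R) (i j : nat) : 0 <= a <= 1 -> 0 <= b <= 1 ->
  a + i%:R = b + j%:R -> i != j ->
  (a = 1 /\ b = 0 /\ j = i.+1) \/ (a = 0 /\ b = 1 /\ i = j.+1).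
Proof.
move=> /andP[a0 a1] /andP[b0 b1] h ij.
case: (ltngtP i j) => hij; last by rewrite hij eqxx in ij.
- have hr : (i%:R : R) + 1 <= j%:R by rewrite natr1 ler_nat.
  left; split; first lra; split; first lra.
  have he : (i%:R : R) + 1 = j%:R by lra.
  by move: he; rewrite natr1 => /eqP; rewrite eqr_nat => /eqP <-.
- have hr : (j%:R : R) + 1 <= i%:R by rewrite natr1 ler_nat.
  right; split; first lra; split; first lra.
  have he : (j%:R : R) + 1 = i%:R by lra.
  by move: he; rewrite natr1 => /eqP; rewrite eqr_nat => /eqP <-.
Qed.

Lemma detv (u v : R) (e : nat) : v = 0 \/ v = 1 -> 0 <= u <= 1 -> (e < N)%N ->
  u + e%:R = N%:R * v -> u = v /\ e = if v == 0 then 0%N else N.-1.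
Proof.
move=> [->|->] /andP[u0 u1] eN; rewrite ?mulr0 ?mulr1 => h.
  by have [-> ->] := det0 u0 h; rewrite eqxx.
by have [-> ->] := det1 u1 eN h; rewrite oner_eq0.
Qed.

End Basic.

Section Shrink.
Import Order.TTheory GRing.Theory Num.Theory.
Variable R : realType.
Variable N : nat.
Hypothesis N1 : (1 < N)%N.

Lemma shrink (S : set R) (K : R) : (forall s, S s -> 0 <= s <= 1) ->
  (forall s, S s -> exists s', S s' /\ N%:R * s = s' + K) ->
  forall s t, S s -> S t -> s = t.
Proof.
move=> HS Hrec.
have H n : forall s t, S s -> S t -> N%:R ^+ n * `|s - t| <= 1.
  elim: n => [|n IH] s t Ss St.
    rewrite expr0 mul1r ler_norml.
    move: (HS s Ss) (HS t St) => /andP[? ?] /andP[? ?]; apply/andP; split; lra.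
  have [s' [Ss' es]] := Hrec s Ss; have [t' [St' et]] := Hrec t St.
  rewrite exprSr -mulrA.
  have -> : N%:R * `|s - t| = `|s' - t'|.
    rewrite -[X in X * _](ger0_norm (ler0n R N)) -normrM mulrBr es et.
    congr `|_|; ring.
  exact: IH.
move=> s t Ss St; apply/eqP; rewrite -subr_eq0 -normr_eq0.
set d := `|s - t|.
have d0 : 0 <= d by apply: normr_ge0.
case: (eqVneq d 0) => // dn0; exfalso.
have dp : 0 < d by rewrite lt0r dn0 d0.
set n := (Num.truncn (d^-1)).+1.
have h1 : d^-1 < n%:R := truncnS_gt _.
have h2 : (n%:R : R) <= N%:R ^+ n by rewrite -natrX ler_nat ltnW // ltn_expl.
have h3 : n%:R * d <= N%:R ^+ n * d := ler_wpM2r d0 h2.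
rewrite -[d^-1]div1r ltr_pdivrMr // in h1.
have := H n s t Ss St; rewrite -/d; lra.
Qed.

End Shrink.

Section Main.
Import Order.TTheory GRing.Theory Num.Theory.
Variable R : realType.
Variable N : nat.
Variable D : {set digit N}.
Variable F : set (R * R).
Hypothesis N1 : (1 < N)%N.
Hypothesis HB : forall p, F p -> forall c, 0 <= cr c p <= 1.
Hypothesis Hdec : forall p, F p -> exists d q, d \in D /\ F q /\ p = phi d q.
Hypothesis Hinc : forall d q, d \in D -> F q -> F (phi d q).

Definition Inter (i j : digit N) := (phi i @` F) `&` (phi j @` F).

Lemma PC_pt (i j i' j' : digit N) :
  (phi2 i i' @` F) `&` (phi2 j j' @` F) !=set0 ->
  exists a' b', F a' /\ F b' /\ phi i (phi i' a') = phi j (phi j' b').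
Proof.
move=> [z [[a' Fa' ea] [b' Fb' eb]]]; exists a', b'; split => //; split => //.
by rewrite /phi2 /= in ea eb; rewrite ea eb.
Qed.

Lemma Inter_pt (i j : digit N) a b : F a -> F b -> phi i a = phi j b -> Inter i j (phi i a).
Proof. by move=> Fa Fb e; split; [exists a | exists b]. Qed.

Lemma PC_mk (i j i' j' : digit N) a b : F a -> F b -> phi i (phi i' a) = phi j (phi j' b) ->
  (phi2 i i' @` F) `&` (phi2 j j' @` F) !=set0.
Proof. by move=> Fa Fb e; exists (phi i (phi i' a)); split; [exists a | exists b]. Qed.

Lemma box0 : (0 : R) <= (0 : R) <= (1 : R).
Proof. by rewrite lexx ler01. Qed.

Lemma key (i j : digit N) x a b P0 P1 bb c (e f : nat) :
  Inter i j `<=` [set x] -> phi i a = x ->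
  (forall c', cr c' a + (cd c' i)%:R = cr c' b + (cd c' j)%:R) ->
  F P0 -> F P1 -> F bb -> cd c i = cd c j ->
  cr c P0 = 0 -> cr c P1 = 1 ->
  cr (~~c) P0 = cr (~~c) a -> cr (~~c) P1 = cr (~~c) a -> cr (~~c) bb = cr (~~c) b ->
  N%:R * cr c a = 1 + e%:R -> N%:R * cr c a = e.+1%:R -> (e.+1 < N)%N ->
  N%:R * cr c b = cr c bb + f%:R -> (f < N)%N -> False.
Proof.
move=> Hx ea Eab FP0 FP1 Fbb hij p0 p1 n0 n1 nb h1 h2 hlt hb hf.
have ab : cr c a = cr c b by have := Eab c; rewrite hij; apply: addIr.
have hbb : cr c bb + f%:R = 0 + e.+1%:R by rewrite add0r -hb -ab h2.
have ok u : F u -> cr c u = cr c bb -> cr (~~c) u = cr (~~c) a -> u = a.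
  move=> Fu uc un.
  have E : phi i u = phi j bb.
    apply/(phi_eqP N1) => c'; case: (bool_cases c c') => ->.
      by rewrite uc hij.
    by rewrite un nb; exact: Eab.
  apply: (@phi_inj _ _ N1 i); rewrite ea.
  exact: Hx _ (Inter_pt Fu Fbb E).
have e0 := ler0n R e.
case: (eqVneq f e.+1) => hfe.
  have bc : cr c bb = 0 by move: hbb; rewrite hfe; apply: addIr.
  have Pa := ok P0 FP0 ltac:(by rewrite p0 bc) n0.
  move: h1; rewrite -Pa p0 mulr0; lra.
case: (adj (HB Fbb c) box0 hbb hfe) => [[bc [_ ef]] | [_ [h01 _]]]; last first.
  by move: h01; apply/eqP; rewrite eq_sym oner_eq0.
have Pa := ok P1 FP1 ltac:(by rewrite p1 bc) n1.
move: h2; rewrite -Pa p1 mulr1 => /eqP; rewrite eqr_nat => /eqP hN.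
by rewrite hN ltnn in hlt.
Qed.

Lemma uniq1 (i j : digit N) x i1 j1 i2 j2 : i != j -> Inter i j `<=` [set x] ->
  i1 \in D -> i2 \in D -> j1 \in D -> j2 \in D ->
  (phi2 i i1 @` F) `&` (phi2 j j1 @` F) !=set0 ->
  (phi2 i i2 @` F) `&` (phi2 j j2 @` F) !=set0 -> i1 = i2.
Proof.
move=> ij Hx Di1 Di2 Dj1 Dj2 /PC_pt [a1' [b1' [Fa1 [Fb1 e1]]]]
  /PC_pt [a2' [b2' [Fa2 [Fb2 e2]]]].
set a := phi i1 a1' in e1. set b := phi j1 b1' in e1.
have Fa : F a := Hinc Di1 Fa1.
have Fb : F b := Hinc Dj1 Fb1.
have ex1 : phi i a = x := Hx _ (Inter_pt Fa Fb e1).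
have Fa2' : F (phi i2 a2') := Hinc Di2 Fa2.
have Fb2' : F (phi j2 b2') := Hinc Dj2 Fb2.
have ex2 : phi i (phi i2 a2') = x := Hx _ (Inter_pt Fa2' Fb2' e2).
have ea : phi i2 a2' = a by apply: (@phi_inj _ _ N1 i); rewrite ex1 ex2.
have eb : phi j2 b2' = b by apply: (@phi_inj _ _ N1 j); rewrite -e2 ex2 -ex1 e1.
have Eab := (phi_eqP N1 _ _ _ _).1 e1.
have Ha1 c : N%:R * cr c a = cr c a1' + (cd c i1)%:R by rewrite (crN N1).
have Ha2 c : N%:R * cr c a = cr c a2' + (cd c i2)%:R by rewrite -ea (crN N1).
have Hb1 c : N%:R * cr c b = cr c b1' + (cd c j1)%:R by rewrite (crN N1).
apply: dg_eq => c.
case: (eqVneq (cd c i) (cd c j)) => hij; last first.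
  have va : cr c a = 0 \/ cr c a = 1.
    by case: (adj (HB Fa c) (HB Fb c) (Eab c) hij) => [[-> _]|[-> _]]; auto.
  have [_ h1] := detv va (HB Fa1 c) (cd_lt c i1) (esym (Ha1 c)).
  have [_ h2] := detv va (HB Fa2 c) (cd_lt c i2) (esym (Ha2 c)).
  by rewrite h1 h2.
have hnc := notc ij hij.
have va' : cr (~~c) a = 0 \/ cr (~~c) a = 1.
  by case: (adj (HB Fa _) (HB Fb _) (Eab _) hnc) => [[-> _]|[-> _]]; auto.
have vb' : cr (~~c) b = 0 \/ cr (~~c) b = 1.
  by case: (adj (HB Fa _) (HB Fb _) (Eab _) hnc) => [[_ [-> _]]|[_ [-> _]]]; auto.
have a1n := (detv va' (HB Fa1 _) (cd_lt _ _) (esym (Ha1 _))).1.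
have a2n := (detv va' (HB Fa2 _) (cd_lt _ _) (esym (Ha2 _))).1.
have b1n := (detv vb' (HB Fb1 _) (cd_lt _ _) (esym (Hb1 _))).1.
case: (eqVneq (cd c i1) (cd c i2)) => // hne; exfalso.
have e12 : cr c a1' + (cd c i1)%:R = cr c a2' + (cd c i2)%:R by rewrite -Ha1 -Ha2.
case: (adj (HB Fa1 c) (HB Fa2 c) e12 hne) => [[p1 [p0 ei]] | [p0 [p1 ei]]].
  apply: (@key i j x a b a2' a1' b1' c (cd c i1) (cd c j1)) => //.
  - by rewrite Ha1 p1 addrC.
  - by rewrite Ha2 p0 add0r ei.
  - by rewrite -ei cd_lt.
  - exact: cd_lt.
apply: (@key i j x a b a1' a2' b1' c (cd c i2) (cd c j1)) => //.
- by rewrite Ha2 p1 addrC.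
- by rewrite Ha1 p0 add0r ei.
- by rewrite -ei cd_lt.
- exact: cd_lt.
Qed.

Lemma back (i j i' j' : digit N) : i != j -> i \in D -> j \in D ->
  (forall y, Inter i j y -> exists a' b', F a' /\ F b' /\
     phi i (phi i' a') = y /\ phi j (phi j' b') = y) ->
  i' \in D -> j' \in D ->
  forall y z, Inter i j y -> Inter i j z -> y = z.
Proof.
move=> ij Di Dj rep Di' Dj'.
have fac w : Inter i j w -> exists a' b', [/\ F a', F b', phi i (phi i' a') = w,
    phi j (phi j' b') = w &
    (forall c, cr c (phi i' a') + (cd c i)%:R = cr c (phi j' b') + (cd c j)%:R)].
  move=> Iw; have [a' [b' [Fa [Fb [ea eb]]]]] := rep w Iw; exists a', b'; split => //.
  by apply/(phi_eqP N1); rewrite ea eb.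
move=> y z Iy Iz; apply: pt_eq => c.
have NN := @Nn0 R N N1.
case: (eqVneq (cd c i) (cd c j)) => hij; last first.
  set v : R := if cd c j == (cd c i).+1 then 1 else 0.
  have hv w : Inter i j w -> N%:R * cr c w = v + (cd c i)%:R.
    move=> Iw; have [a' [b' [Fa' Fb' ea eb E]]] := fac w Iw.
    rewrite -ea (crN N1); congr (_ + _).
    have Fa := Hinc Di' Fa'; have Fb := Hinc Dj' Fb'.
    rewrite /v; case: (adj (HB Fa c) (HB Fb c) (E c) hij) => [[-> [_ ->]] | [-> [_ ->]]].
      by rewrite eqxx.
    by case: eqP => // ?; exfalso; lia.
  by apply: (mulfI NN); rewrite hv // hv.
have hnc := notc ij hij.
have facc w : Inter i j w -> exists a' b', [/\ F a', F b', phi i (phi i' a') = w,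
    phi j (phi j' b') = w &
    [/\ cr c (phi i' a') = cr c (phi j' b'),
        cr c a' + (cd c i')%:R = cr c b' + (cd c j')%:R,
        cr (~~c) a' = cr (~~c) (phi i' a') & cr (~~c) b' = cr (~~c) (phi j' b')]].
  move=> Iw; have [a' [b' [Fa' Fb' ea eb E]]] := fac w Iw.
  have Fa := Hinc Di' Fa'; have Fb := Hinc Dj' Fb'.
  have ab : cr c (phi i' a') = cr c (phi j' b') by have := E c; rewrite hij; apply: addIr.
  have va : cr (~~c) (phi i' a') = 0 \/ cr (~~c) (phi i' a') = 1.
    by case: (adj (HB Fa _) (HB Fb _) (E _) hnc) => [[-> _]|[-> _]]; auto.
  have vb : cr (~~c) (phi j' b') = 0 \/ cr (~~c) (phi j' b') = 1.
    by case: (adj (HB Fa _) (HB Fb _) (E _) hnc) => [[_ [-> _]]|[_ [-> _]]]; auto.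
  exists a', b'; split => //; split => //.
  - by rewrite -!(crN N1) ab.
  - exact: (detv va (HB Fa' _) (cd_lt _ _) (esym (crN N1 _ _ _))).1.
  - exact: (detv vb (HB Fb' _) (cd_lt _ _) (esym (crN N1 _ _ _))).1.
case: (eqVneq (cd c i') (cd c j')) => hij'; last first.
  set v : R := if cd c j' == (cd c i').+1 then 1 else 0.
  have hv w : Inter i j w ->
      N%:R * (N%:R * cr c w) = v + (cd c i')%:R + N%:R * (cd c i)%:R.
    move=> Iw; have [a' [b' [Fa' Fb' ea eb [ab e' _ _]]]] := facc w Iw.
    rewrite -ea (crN2 N1); congr (_ + _ + _).
    rewrite /v; case: (adj (HB Fa' c) (HB Fb' c) e' hij') => [[-> [_ ->]] | [-> [_ ->]]].
      by rewrite eqxx.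
    by case: eqP => // ?; exfalso; lia.
  by apply: (mulfI NN); apply: (mulfI NN); rewrite hv // hv.
set K : R := ((cd c i')%:R + N%:R * (cd c i)%:R - (cd c i)%:R) / N%:R.
have hK : N%:R * K = (cd c i')%:R + N%:R * (cd c i)%:R - (cd c i)%:R.
  by rewrite /K mulrC divfK.
apply: (@shrink R N N1 [set cr c w | w in Inter i j] K); last 2 first.
- by exists y.
- by exists z.
- move=> s [w Iw <-]; have [a' [b' [Fa' _ ea _ _]]] := facc w Iw.
  rewrite -ea; apply: HB; apply: Hinc => //; exact: Hinc.
move=> s [w Iw <-]; have [a' [b' [Fa' Fb' ea eb [ab e' na nb]]]] := facc w Iw.
have E := (phi_eqP N1 _ _ _ _).1 (etrans ea (esym eb)).
have Eq : phi i a' = phi j b'.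
  apply/(phi_eqP N1) => c'; case: (bool_cases c c') => ->.
    have : cr c a' = cr c b' by move: e'; rewrite hij'; apply: addIr.
    by move=> ->; rewrite hij.
  by rewrite na nb; exact: E.
exists (cr c (phi i a')); split; first by exists (phi i a'); first exact: Inter_pt Fa' Fb' Eq.
rewrite -ea; apply: (mulfI NN).
rewrite (crN2 N1) mulrDr hK (crN N1); ring.
Qed.

Lemma uniq2 (i j : digit N) x i1 j1 i2 j2 : i != j -> Inter i j `<=` [set x] ->
  i1 \in D -> i2 \in D -> j1 \in D -> j2 \in D ->
  (phi2 i i1 @` F) `&` (phi2 j j1 @` F) !=set0 ->
  (phi2 i i2 @` F) `&` (phi2 j j2 @` F) !=set0 -> j1 = j2.
Proof.
move=> ij Hx Di1 Di2 Dj1 Dj2 h1 h2.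
apply: (@uniq1 j i x j1 i1 j2 i2) => //.
- by rewrite eq_sym.
- by rewrite /Inter setIC.
- by rewrite setIC.
- by rewrite setIC.
Qed.

Lemma corner (i j : digit N) x i' j' : i != j -> Inter i j `<=` [set x] ->
  i' \in D -> j' \in D ->
  (phi2 i i' @` F) `&` (phi2 j j' @` F) !=set0 ->
  (forall c, cd c i' = 0%N \/ cd c i' = N.-1) ->
  forall c, cd c j' = 0%N \/ cd c j' = N.-1.
Proof.
move=> ij Hx Di' Dj' ne hi' c.
have NN := @Nn0 R N N1.
have [a' [b' [Fa' [Fb' e]]]] := PC_pt ne.
have Fa : F (phi i' a') := Hinc Di' Fa'.
have Fb : F (phi j' b') := Hinc Dj' Fb'.
have Eab := (phi_eqP N1 _ _ _ _).1 e.
have E2 c0 : cr c0 a' + (cd c0 i')%:R + N%:R * (cd c0 i)%:R =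
             cr c0 b' + (cd c0 j')%:R + N%:R * (cd c0 j)%:R by rewrite -!(crN2 N1) e.
have Ha c0 : N%:R * cr c0 (phi i' a') = cr c0 a' + (cd c0 i')%:R by rewrite (crN N1).
have Hb c0 : N%:R * cr c0 (phi j' b') = cr c0 b' + (cd c0 j')%:R by rewrite (crN N1).
case: (eqVneq (cd c i) (cd c j)) => hij; last first.
  have vb : cr c (phi j' b') = 0 \/ cr c (phi j' b') = 1.
    by case: (adj (HB Fa c) (HB Fb c) (Eab c) hij) => [[_ [-> _]]|[_ [-> _]]]; auto.
  have [_ ->] := detv vb (HB Fb' c) (cd_lt c j') (esym (Hb c)).
  by case: ifP; auto.
case: (eqVneq (cd c i') (cd c j')) => hij'; first by rewrite -hij'; exact: hi'.
exfalso.
have hnc := notc ij hij.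
have va' : cr (~~c) (phi i' a') = 0 \/ cr (~~c) (phi i' a') = 1.
  by case: (adj (HB Fa _) (HB Fb _) (Eab _) hnc) => [[-> _]|[-> _]]; auto.
have vb' : cr (~~c) (phi j' b') = 0 \/ cr (~~c) (phi j' b') = 1.
  by case: (adj (HB Fa _) (HB Fb _) (Eab _) hnc) => [[_ [-> _]]|[_ [-> _]]]; auto.
have a'n := (detv va' (HB Fa' _) (cd_lt _ _) (esym (Ha _))).1.
have [b'n j'n] := detv vb' (HB Fb' _) (cd_lt _ _) (esym (Hb _)).
have ab : cr c (phi i' a') = cr c (phi j' b') by have := Eab c; rewrite hij; apply: addIr.
have e' : cr c a' + (cd c i')%:R = cr c b' + (cd c j')%:R by rewrite -Ha -Hb ab.
have [d [u [Dd [Fu ebu]]]] := Hdec Fb'.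
have Hu c0 : N%:R * cr c0 b' = cr c0 u + (cd c0 d)%:R by rewrite ebu (crN N1).
have dc : cd c d = cd c i'.
  case/andP: (HB Fu c) => u0 u1.
  case: (adj (HB Fa' c) (HB Fb' c) e' hij') => [[_ [b0 ej]] | [_ [b1 ei]]].
  - have h0 : cr c u + (cd c d)%:R = 0 by rewrite -Hu b0 mulr0.
    have [_ ->] := det0 u0 h0.
    case: (hi' c) => [-> //|hN]; exfalso.
    by have := cd_lt c j'; rewrite ej hN; lia.
  - have h1 : cr c u + (cd c d)%:R = N%:R by rewrite -Hu b1 mulr1.
    have [_ ->] := det1 u1 (cd_lt c d) h1.
    case: (hi' c) => [h0|-> //]; exfalso.
    by rewrite h0 in ei.
have dnc : cd (~~c) d = cd (~~c) j'.
  have vb'' : cr (~~c) b' = 0 \/ cr (~~c) b' = 1 by rewrite b'n.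
  have [_ ->] := detv vb'' (HB Fu _) (cd_lt _ _) (esym (Hu _)).
  by rewrite j'n b'n.
have ne2 : (phi2 i i' @` F) `&` (phi2 j d @` F) !=set0.
  apply: (PC_mk Fa Fb); apply: pt_eq => c0; apply: (mulfI NN); apply: (mulfI NN).
  rewrite !(crN2 N1).
  case: (bool_cases c c0) => ->.
    by rewrite ab hij dc.
  by rewrite dnc -a'n -b'n; exact: E2.
have hdj := uniq2 ij Hx Di' Di' Dj' Dd ne ne2.
by rewrite -hdj in dc; rewrite dc eqxx in hij'.
Qed.

End Main.

Section Attr.
Import Order.TTheory GRing.Theory Num.Theory.

Lemma bounded_coord (R : realType) (F : set (R * R)) : compact F ->
  exists M : R, forall x, F x -> `|x.1| <= M /\ `|x.2| <= M.
Proof.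
move=> /compact_bounded [M [Mr HM]].
exists (M + 1) => x Fx.
have := HM (M + 1) ltac:(lra) x Fx.
move=> H. cbn in H. move: H; rewrite /ProdNormedZmodule.norm ge_max => /andP[]; by [].
Qed.

Lemma sup_bound (R : realType) (F : set R) (N K : R) : 1 < N -> F !=set0 ->
  (exists M, forall x, F x -> x <= M) ->
  (forall x, F x -> exists y, F y /\ x <= (y + K) / N) ->
  forall x, F x -> x <= K / (N - 1).
Proof.
move=> N1 [x0 Fx0] [M HM] Hrec.
have hs : has_sup F by split; [exists x0 | exists M => y Fy; exact: HM].
have ub := sup_upper_bound hs.
have : sup F <= (sup F + K) / N.
  apply: ge_sup; first by exists x0.
  move=> x Fx; have [y [Fy Hxy]] := Hrec x Fx; apply: (le_trans Hxy).
  rewrite ler_pM2r; last by rewrite invr_gt0; lra.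
  by rewrite lerD2r; apply: ub.
rewrite ler_pdivlMr; last lra.
move=> H x Fx; apply: (le_trans (ub x Fx)).
rewrite ler_pdivlMr; last lra.
lra.
Qed.

Lemma crdiv (R : realType) N c (d : digit N) (x : R * R) :
  cr c (phi d x) = (cr c x + (cd c d)%:R) / N%:R.
Proof. by case: c. Qed.

Lemma attr_props (R : realType) N (D : {set digit N}) (F : set (R * R)) :
  (1 < N)%N -> is_attractor D F ->
  [/\ (forall p, F p -> forall c, 0 <= cr c p <= 1),
      (forall p, F p -> exists d q, d \in D /\ F q /\ p = phi d q) &
      (forall d q, d \in D -> F q -> F (phi d q))].
Proof.
move=> N1 [cF F0 HF].
have Hdec : forall p, F p -> exists d q, d \in D /\ F q /\ p = phi d q.
  move=> p Fp; have : (\bigcup_(i in [set i | i \in D]) (phi i @` F)) p by rewrite -HF.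
  by case=> d Dd [q Fq <-]; exists d, q.
have Hinc : forall d q, d \in D -> F q -> F (phi d q).
  by move=> d q Dd Fq; rewrite HF; exists d => //; exists q.
split => // p Fp c.
have [M HM] := bounded_coord cF.
have Nr : 1 < (N%:R : R) by rewrite ltr1n.
have bM q : F q -> `|cr c q| <= M by case: c => /=; move/HM => [].
have [x0 Fx0] := F0.
have hd (d : digit N) : ((cd c d)%:R : R) <= N%:R - 1.
  have : ((cd c d).+1 <= N)%N := cd_lt c d.
  rewrite -(ler_nat R) -natr1; lra.
have hd0 (d : digit N) : 0 <= ((cd c d)%:R : R) := ler0n _ _.
have up := @sup_bound R [set cr c q | q in F] N%:R (N%:R - 1) Nr
  ltac:(by exists (cr c x0), x0)
  ltac:(by exists M => s [q Fq <-]; apply: le_trans (ler_norm _) (bM q Fq)).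
have lo := @sup_bound R [set - cr c q | q in F] N%:R 0 Nr
  ltac:(by exists (- cr c x0), x0)
  ltac:(by exists M => s [q Fq <-]; apply: le_trans (ler_norm _) _; rewrite normrN; apply: bM).
have u1 : cr c p <= 1.
  have : cr c p <= (N%:R - 1) / (N%:R - 1).
    apply: up; last by exists p.
    move=> s [q Fq <-]; have [d [u [Dd [Fu ->]]]] := Hdec q Fq.
    exists (cr c u); split; first by exists u.
    rewrite crdiv ler_pM2r; last by rewrite invr_gt0; lra.
    by rewrite lerD2l.
  by rewrite divff //; apply/eqP; lra.
have l0 : - cr c p <= 0.
  have : - cr c p <= 0 / (N%:R - 1).
    apply: lo; last by exists p.
    move=> s [q Fq <-]; have [d [u [Dd [Fu ->]]]] := Hdec q Fq.
    exists (- cr c u); split; first by exists u.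
    rewrite crdiv addr0 -mulNr ler_pM2r; last by rewrite invr_gt0; lra.
    have := hd0 d; lra.
  by rewrite mul0r.
apply/andP; split; lra.
Qed.

End Attr.

Theorem mainTheorem12 (R : realType) (N : nat) (D : {set digit N})
    (F : set (R * R)) :
  GSC_data D -> is_attractor D F -> connected F ->
  forall i j : digit N, i \in D -> j \in D -> i != j ->
  ((exists x : R * R, (phi i @` F) `&` (phi j @` F) = [set x]) <->
   (exists! p : digit N * digit N,
      (p.1 \in D /\ p.2 \in D) /\
      (phi2 i p.1 @` F) `&` (phi2 j p.2 @` F) !=set0)) /\
  ((exists x : R * R, (phi i @` F) `&` (phi j @` F) = [set x]) ->
   forall i' j' : digit N, i' \in D -> j' \in D ->
   (phi2 i i' @` F) `&` (phi2 j j' @` F) !=set0 ->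
   corner_digit i' -> corner_digit j').
Proof.
move=> [N1 _] attr _ i j Di Dj ij.
have [HB Hdec Hinc] := attr_props N1 attr.
split; first split.
- move=> [x Hx].
  have Ix : ((phi i @` F) `&` (phi j @` F)) x by rewrite Hx.
  have Hsub : Inter F i j `<=` [set x] by rewrite /Inter Hx.
  case: Ix => [[a Fa ea] [b Fb eb]].
  have [i' [a' [Di' [Fa' ea']]]] := Hdec a Fa.
  have [j' [b' [Dj' [Fb' eb']]]] := Hdec b Fb.
  have ne1 : (phi2 i i' @` F) `&` (phi2 j j' @` F) !=set0.
    by apply: (PC_mk Fa' Fb'); rewrite -ea' -eb' ea eb.
  exists (i', j'); split; first by split.
  move=> [i2 j2] [[/= Di2 Dj2] ne2]; congr pair.
    exact: (uniq1 N1 HB Hinc ij Hsub Di' Di2 Dj' Dj2 ne1 ne2).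
  exact: (uniq2 N1 HB Hinc ij Hsub Di' Di2 Dj' Dj2 ne1 ne2).
- move=> [[i' j'] [[[/= Di' Dj'] ne] Hu]].
  have rep : forall y, Inter F i j y -> exists a' b', F a' /\ F b' /\
      phi i (phi i' a') = y /\ phi j (phi j' b') = y.
    move=> y [[a Fa ea] [b Fb eb]].
    have [i2 [a' [Di2 [Fa' ea']]]] := Hdec a Fa.
    have [j2 [b' [Dj2 [Fb' eb']]]] := Hdec b Fb.
    have ne2 : (phi2 i i2 @` F) `&` (phi2 j j2 @` F) !=set0.
      by apply: (PC_mk Fa' Fb'); rewrite -ea' -eb' ea eb.
    have := Hu (i2, j2) (conj (conj Di2 Dj2) ne2); case=> e1 e2; subst i2 j2.
    by exists a', b'; rewrite -ea' -eb'.
  have [a' [b' [Fa' [Fb' e]]]] := PC_pt ne.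
  have Iz := Inter_pt (Hinc _ _ Di' Fa') (Hinc _ _ Dj' Fb') e.
  exists (phi i (phi i' a')); apply/seteqP; split => y; last by move=> ->.
  move=> Iy; exact: (back N1 HB Hinc ij Di Dj rep Di' Dj' Iy Iz).
- move=> [x Hx] i' j' Di' Dj' ne ci'.
  have Hsub : Inter F i j `<=` [set x] by rewrite /Inter Hx.
  have hi' c : cd c i' = 0%N \/ cd c i' = N.-1.
    by move: ci'; rewrite /corner_digit => /andP[/orP[]/eqP h1 /orP[]/eqP h2];
      case: c; rewrite /cd; auto.
  have hj' := corner N1 HB Hdec Hinc ij Hsub Di' Dj' ne hi'.
  rewrite /corner_digit; apply/andP; split; apply/orP.
    by case: (hj' true) => /= ->; rewrite eqxx ?orbT; auto.
  by case: (hj' false) => /= ->; rewrite eqxx ?orbT; auto.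
Qed.
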